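(* $$\limsup_{n\to\infty}\bigl(V(n+1)-V(n)\bigr)=+\infty \quad\text{and}\quad \liminf_{n\to\infty}\bigl(V(n+1)-V(n)\bigr)=-\infty.$$
   Context: For a positive integer $n$, an integer $a$ is called regular modulo $n$ if there exists an integer $x$ with $a^2x\equiv a \pmod n$. Let $V(n)$ denote the number of integers $a$ with $1\le a\le n$ that are regular modulo $n$. (Known fact: $V$ is multiplicative, $V(1)=1$, and $V(p^{\alpha})=p^{\alpha}-p^{\alpha-1}+1$ for a prime $p$ and $\alpha\ge1$.) *)

(* Defs.v *)
From mathcomp Require Import all_boot.
Set Implicit Arguments. Unset Strict Implicit. Unset Printing Implicit Defensive.

(* a is regular modulo n iff there is an integer x with a^2 x = a (mod n).
   Since x only matters modulo n, it suffices to search x in {0,..,n-1}. *)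
Definition regularb (n a : nat) : bool :=
  [exists x : 'I_n, a ^ 2 * x == a %[mod n]].

Definition V (n : nat) : nat :=
  \sum_(1 <= a < n.+1) regularb n a.

(* Main.v *)
Require Import Defs.
From mathcomp Require Import all_boot all_algebra cyclic zify.
Import GRing.Theory Num.Theory.
Lemma reg_of (m a : nat) : 0 < m -> coprime (gcdn a m) (m %/ gcdn a m) -> regularb m a.
Proof.
move=> m0 cop.
set g := gcdn a m in cop *; set h := m %/ g in cop *.
have gm : g %| m by exact: dvdn_gcdr.
have ga : g %| a by exact: dvdn_gcdl.
have mgh : m = h * g by rewrite /h divnK.
have h0 : 0 < h by move: m0; rewrite mgh muln_gt0 => /andP[].
have cah : coprime a h.
  have dg : gcdn a h %| g.
    rewrite dvdn_gcd dvdn_gcdl /=.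
    apply: dvdn_trans (dvdn_gcdr a h) _; rewrite mgh; exact: dvdn_mulr.
  have := coprime_dvdl dg cop.
  rewrite /coprime; move/eqP=> e; apply/eqP; rewrite -e; apply/esym/gcdn_idPl.
  exact: dvdn_gcdr.
case: (posnP a) => [->|a0].
  apply/existsP; by exists (Ordinal m0); rewrite /= muln0.
set t := totient h.
have t0 : 0 < t by rewrite totient_gt0.
have at1 : 1 <= a ^ t by rewrite expn_gt0 a0.
have E := Euler_exp_totient cah.
have hd : h %| a ^ t - 1 by rewrite -eqn_mod_dvd // E.
apply/existsP; exists (Ordinal (ltn_pmod (a ^ t.-1) m0)) => /=.
rewrite modnMmr.
have -> : a ^ 2 * a ^ t.-1 = a * a ^ t by rewrite -expnS -expnD; congr (_ ^ _); lia.
rewrite eqn_mod_dvd; last by rewrite -{1}(muln1 a) leq_mul2l at1 orbT.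
have -> : a * a ^ t - a = a * (a ^ t - 1) by rewrite mulnBr muln1.
rewrite mgh mulnC; exact: dvdn_mul.
Qed.

Lemma sqfree_cop m d : 0 < m -> (forall q, prime q -> ~~ (q * q %| m)) -> d %| m ->
  coprime d (m %/ d).
Proof.
move=> m0 sq dm.
have d0 : 0 < d by apply: dvdn_gt0 dm.
rewrite /coprime.
set g := gcdn d (m %/ d).
have g0 : 0 < g by rewrite gcdn_gt0 d0.
case: (ltngtP g 1) => //; first by rewrite ltnNge g0.
move=> g1.
have pq := pdiv_prime g1.
have /negP[] := sq _ pq; rewrite -(divnK dm).
have qg := pdiv_dvd g.
apply: dvdn_mul.
  exact: dvdn_trans qg (dvdn_gcdr _ _).
exact: dvdn_trans qg (dvdn_gcdl _ _).
Qed.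

Lemma nonreg m a : 4 %| m -> a %% 4 = 2 -> ~~ regularb m a.
Proof.
move=> m4 a2; apply/existsP => -[x /eqP hx].
have := congr1 (modn^~ 4) hx; rewrite !modn_dvdm // a2.
have : 4 %| a ^ 2 * x.
  apply: dvdn_mulr; have : 2 %| a.
    by rewrite (divn_eq a 4) a2 dvdn_add // dvdn_mull.
  by move=> /dvdnP[c ->]; rewrite expnMn; apply: dvdn_mull.
by move/eqP => ->.
Qed.

Lemma cnt k : \sum_(1 <= a < (4 * k).+1) (a %% 4 != 2) = 3 * k.
Proof.
elim: k => [|k IH]; first by rewrite big_geq.
have h j : (4 * k + j) %% 4 = j %% 4 by rewrite mulnC modnMDl.
rewrite mulnS add4n big_nat_recr // big_nat_recr // big_nat_recr // big_nat_recr //= IH.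
have h1 : (4 * k).+1 %% 4 = 1 by rewrite -addn1 h.
have h2 : (4 * k).+2 %% 4 = 2 by rewrite -addn2 h.
have h3 : (4 * k).+3 %% 4 = 3 by rewrite -addn3 h.
have h4 : (4 * k).+4 %% 4 = 0 by rewrite -addn4 h.
rewrite h1 h2 h3 h4 /=.
lia.
Qed.

Lemma V_le m : 4 %| m -> V m <= 3 * (m %/ 4).
Proof.
move=> m4; rewrite /V.
apply: (@leq_trans (\sum_(1 <= a < m.+1) (a %% 4 != 2))).
  apply: leq_sum => a _.
  case: eqP => [a2|_]; last by case: regularb.
  by rewrite (negbTE (@nonreg m a m4 a2)).
by rewrite -{1}(divnK m4) mulnC cnt.
Qed.

Lemma V_sq m : 0 < m -> (forall q, prime q -> ~~ (q * q %| m)) -> V m = m.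
Proof.
move=> m0 sq; rewrite /V (eq_bigr (fun _ => 1)).
  by rewrite sum_nat_const_nat muln1 subn1.
move=> a _; rewrite reg_of //; apply: sqfree_cop => //; exact: dvdn_gcdr.
Qed.

Lemma sq_p p : prime p -> forall q, prime q -> ~~ (q * q %| p).
Proof.
move=> pp q pq; apply/negP => h.
have qp : q %| p by apply: dvdn_trans h; apply: dvdn_mulr.
move: qp; rewrite dvdn_prime2 // => /eqP e; subst q.
have := dvdn_leq (prime_gt0 pp) h.
have := prime_gt1 pp; nia.
Qed.

Lemma sq_3p p : prime p -> 3 < p -> forall q, prime q -> ~~ (q * q %| 3 * p).
Proof.
move=> pp p3 q pq; apply/negP => h.
have : q %| 3 * p by apply: dvdn_trans h; apply: dvdn_mulr.
rewrite Euclid_dvdM // !dvdn_prime2 // => /orP[] /eqP e; subst q.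
  move: h; rewrite dvdn_pmul2l // dvdn_prime2 // => /eqP e; lia.
move: h; rewrite (mulnC 3) dvdn_pmul2l ?prime_gt0 // => h.
have := dvdn_leq _ h; lia.
Qed.

Lemma main_nat (B : nat) : exists p, B < p /\ prime p /\ 3 < p /\ odd p.
Proof.
have [p Bp pp] := prime_above (B + 4).
exists p; split; first lia.
split => //; split; first lia.
by case: (even_prime pp) => [e|//]; lia.
Qed.

Local Open Scope ring_scope.

Theorem proposition3 :
  (forall (M : int) (N : nat), exists n : nat, (N <= n)%N /\
      M <= (V n.+1)%:Z - (V n)%:Z) /\
  (forall (M : int) (N : nat), exists n : nat, (N <= n)%N /\
      (V n.+1)%:Z - (V n)%:Z <= M).
Proof.
split=> M N; have [p [Bp [pp [p3 po]]]] := main_nat (4 * (absz M + N + 2)).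
- have [m [mV [m1 mp]]] : exists m, (V m = m /\ m %% 4 = 1 /\ p <= m)%N.
    have p2 : (p %% 2 = 1)%N by rewrite modn2 po.
    have : (p %% 4 = 1 \/ p %% 4 = 3)%N by lia.
    case=> h.
      exists p; split; first by apply: V_sq; [lia| exact: sq_p].
      lia.
    exists (3 * p)%N; split; first by apply: V_sq; [lia| exact: sq_3p].
    lia.
  exists m.-1; split; first lia.
  have m4 : (4 %| m.-1)%N by lia.
  have := @V_le _ m4.
  have -> : m.-1.+1 = m by lia.
  rewrite mV; lia.
- have [m [mV [m1 mp]]] : exists m, (V m = m /\ m %% 4 = 3 /\ p <= m)%N.
    have p2 : (p %% 2 = 1)%N by rewrite modn2 po.
    have : (p %% 4 = 1 \/ p %% 4 = 3)%N by lia.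
    case=> h.
      exists (3 * p)%N; split; first by apply: V_sq; [lia| exact: sq_3p].
      lia.
    exists p; split; first by apply: V_sq; [lia| exact: sq_p].
    lia.
  exists m; split; first lia.
  have m4 : (4 %| m.+1)%N by lia.
  have := @V_le _ m4.
  rewrite mV; lia.
Qed.
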